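(* Assume condition (C) below holds. Then for every $\boldsymbol\theta\in\boldsymbol\Theta$, as $a,b\to\infty$, $$\mathrm E_{\boldsymbol\theta}[\hat T]\;\le\;(1+o(1))\max\left\{\frac{\log b}{I^0(\boldsymbol\theta)},\;\frac{\log a}{I^1(\boldsymbol\theta)}\right\},$$ where a term with denominator $+\infty$ is interpreted as $0$.
   Context: Setting: $K\ge1$ mutually independent data streams $\{X_k(n),n\ge1\}$, $k\in[K]$, each i.i.d. with density $f_{\theta_k}$ w.r.t. a $\sigma$-finite measure $\nu$, $\{f_\theta:\theta\in\Theta\}$ a parametric family, $\Theta=\Theta^0\cup\Theta^1$ with $\Theta^0,\Theta^1$ nonempty disjoint (noise/signal parameters). $I(\theta,\theta')=\int f_\theta\log(f_\theta/f_{\theta'})d\nu$; standing assumption $\inf_{\theta\in\Theta^1}I(\theta^0,\theta)>0$ for all $\theta^0\in\Theta^0$ and $\inf_{\theta\in\Theta^0}I(\theta^1,\theta)>0$ for all $\theta^1\in\Theta^1$. $\boldsymbol\Theta=\{\boldsymbol\theta\in\Theta^K:\exists\theta^0\in\Theta^0,\theta^1\in\Theta^1$ with $\theta_k=\theta^0$ whenever $\theta_k\in\Theta^0$ and $\theta_k=\theta^1$ whenever $\theta_k\in\Theta^1\}$. $\mathrm P_{\boldsymbol\theta},\mathrm E_{\boldsymbol\theta}$: stream $k$ has density $f_{\theta_k}$. $I(\boldsymbol\theta,\boldsymbol\theta')=\sum_kI(\theta_k,\theta_k')$. $A(\boldsymbol\theta)=\{k:\theta_k\in\Theta^1\}$.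 $I^0(\boldsymbol\theta)=\inf\{I(\boldsymbol\theta,\boldsymbol\theta'):\boldsymbol\theta'\in\boldsymbol\Theta, A(\boldsymbol\theta')\setminus A(\boldsymbol\theta)\ne\emptyset\}$, $I^1(\boldsymbol\theta)=\inf\{I(\boldsymbol\theta,\boldsymbol\theta'):\boldsymbol\theta'\in\boldsymbol\Theta, A(\boldsymbol\theta)\setminus A(\boldsymbol\theta')\ne\emptyset\}$, $\inf\emptyset=+\infty$. The procedure: $L_k(n;\theta)=\prod_{t=1}^nf_\theta(X_k(t))$; $\boldsymbol L(n;\boldsymbol\theta')=\prod_kL_k(n;\theta'_k)$; $L_k^i(n)=\sup_{\theta\in\Theta^i}L_k(n;\theta)$. $\hat\theta_k(n)\in\Theta$ is a (near-)MLE: $L_k(n;\hat\theta_k(n))\ge\sup_{\theta\in\Theta}L_k(n;\theta)-1/n$, $\hat\theta_k(0)\in\Theta$ arbitrary. $\hat{\boldsymbol L}(0)=1$, $\hat{\boldsymbol L}(n)=\hat{\boldsymbol L}(n-1)\prod_kf_{\hat\theta_k(n-1)}(X_k(n))$. $\hat A(n)=\{k:L_k^1(n)\ge L_k^0(n)\}$. $\boldsymbol L^0(n)=\sup\{\boldsymbol L(n;\boldsymbol\theta'):\boldsymbol\theta'\in\boldsymbol\Theta,A(\boldsymbol\theta')\setminus\hat A(n)\ne\emptyset\}$, $\boldsymbol L^1(n)=\sup\{\boldsymbol L(n;\boldsymbol\theta'):\boldsymbol\theta'\in\boldsymbol\Theta,\hat A(n)\setminus A(\boldsymbol\theta')\neq\emptyset\}$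 (sup of empty set is $0$, $x/0=+\infty$ for $x>0$). $\hat T=\inf\{n\ge1:\hat{\boldsymbol L}(n)/\boldsymbol L^0(n)\ge b\text{ and }\hat{\boldsymbol L}(n)/\boldsymbol L^1(n)\ge a\}$. Condition (C): for every $\boldsymbol\theta\in\boldsymbol\Theta$, $\epsilon>0$, $i\in\{0,1\}$: $\sum_{n\ge1}\mathrm P_{\boldsymbol\theta}\big(\tfrac1n\log\frac{\hat{\boldsymbol L}(n)}{\boldsymbol L^i(n)}\le I^i(\boldsymbol\theta)-\epsilon\big)<\infty$. *)

(* Defs.v *)
From HB Require Import structures.
From mathcomp Require Export all_boot all_order all_algebra.
From mathcomp Require Export all_classical all_reals all_analysis.
From mathcomp Require Export measurable_realfun.
Set Implicit Arguments.
Unset Strict Implicit.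
Unset Printing Implicit Defensive.
Import Order.TTheory GRing.Theory Num.Theory.
Local Open Scope classical_set_scope.
Local Open Scope ring_scope.

Section SeqTest.
Context {R : realType} {Theta : Type}.

Definition kl_integrand (p q : R) : \bar R :=
  if p <= 0 then 0%E else if q <= 0 then +oo%E else (p * ln (p / q))%:E.

Definition KL {d} {S : measurableType d} (nu : {measure set S -> \bar R})
  (f : Theta -> S -> R) (t t' : Theta) : \bar R :=
  (\int[nu]_x kl_integrand (f t x) (f t' x))%E.

Definition standing_assumption {d} {S : measurableType d}
  (nu : {measure set S -> \bar R}) (f : Theta -> S -> R) (Th0 Th1 : set Theta) :=
  (forall t0, Th0 t0 -> (0 < ereal_inf [set KL nu f t0 t | t in Th1])%E) /\
  (forall t1, Th1 t1 -> (0 < ereal_inf [set KL nu f t1 t | t in Th0])%E).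

Definition bTheta (Th0 Th1 : set Theta) (K : nat) : set ('I_K -> Theta) :=
  [set th | exists t0 t1, Th0 t0 /\ Th1 t1 /\
     forall k, (Th0 (th k) -> th k = t0) /\ (Th1 (th k) -> th k = t1)].

Definition KLvec {d} {S : measurableType d} (nu : {measure set S -> \bar R})
  (f : Theta -> S -> R) (K : nat) (th th' : 'I_K -> Theta) : \bar R :=
  (\sum_(k < K) KL nu f (th k) (th' k))%E.

(* A(theta): the signal streams *)
Definition Aset (Th1 : set Theta) (K : nat) (th : 'I_K -> Theta) : set 'I_K :=
  [set k | Th1 (th k)].

Definition Info0 {d} {S : measurableType d} (nu : {measure set S -> \bar R})
  (f : Theta -> S -> R) (Th0 Th1 : set Theta) (K : nat) (th : 'I_K -> Theta) :=
  ereal_inf [set KLvec nu f th th' | th' in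
    [set th' | bTheta Th0 Th1 th' /\ (Aset Th1 th' `\` Aset Th1 th) !=set0]].

Definition Info1 {d} {S : measurableType d} (nu : {measure set S -> \bar R})
  (f : Theta -> S -> R) (Th0 Th1 : set Theta) (K : nat) (th : 'I_K -> Theta) :=
  ereal_inf [set KLvec nu f th th' | th' in
    [set th' | bTheta Th0 Th1 th' /\ (Aset Th1 th `\` Aset Th1 th') !=set0]].

Section Likelihoods.
Context {d} {S : measurableType d} {Omega : Type} (f : Theta -> S -> R) (K : nat)
  (X : 'I_K -> nat -> Omega -> S).

Definition Lk (k : 'I_K) (n : nat) (t : Theta) (w : Omega) : R :=
  \prod_(1 <= s < n.+1) f t (X k s w).

Definition Lvec (n : nat) (th' : 'I_K -> Theta) (w : Omega) : R :=
  \prod_(k < K) Lk k n (th' k) w.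

Definition Lk_sup (Thi : set Theta) (k : 'I_K) (n : nat) (w : Omega) : \bar R :=
  ereal_sup [set (Lk k n t w)%:E | t in Thi].

Definition near_MLE (thhat : 'I_K -> nat -> Omega -> Theta) :=
  forall k n w, (1 <= n)%N ->
    (ereal_sup [set (Lk k n t w)%:E | t in setT] - (n%:R^-1)%:E
       <= (Lk k n (thhat k n w) w)%:E)%E.

Definition Lhat (thhat : 'I_K -> nat -> Omega -> Theta) (n : nat) (w : Omega) : R :=
  \prod_(1 <= s < n.+1) \prod_(k < K) f (thhat k s.-1 w) (X k s w).

Definition Ahat (Th0 Th1 : set Theta) (n : nat) (w : Omega) : set 'I_K :=
  [set k | (Lk_sup Th0 k n w <= Lk_sup Th1 k n w)%E].

Definition esup0 (A : set (\bar R)) : \bar R :=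
  if `[< A = set0 >] then 0%E else ereal_sup A.

Definition Lbig0 (Th0 Th1 : set Theta) (n : nat) (w : Omega) : \bar R :=
  esup0 [set (Lvec n th' w)%:E | th' in
    [set th' | bTheta Th0 Th1 th' /\ (Aset Th1 th' `\` Ahat Th0 Th1 n w) !=set0]].

Definition Lbig1 (Th0 Th1 : set Theta) (n : nat) (w : Omega) : \bar R :=
  esup0 [set (Lvec n th' w)%:E | th' in
    [set th' | bTheta Th0 Th1 th' /\ (Ahat Th0 Th1 n w `\` Aset Th1 th') !=set0]].

End Likelihoods.

Definition eratio (x : R) (y : \bar R) : \bar R :=
  match y with
  | r%:E => if r == 0 then (if 0 < x then +oo%E else 0%E) else (x / r)%:E
  | _ => 0%E
  end.

Definition elog (x : \bar R) : \bar R :=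
  match x with
  | r%:E => if 0 < r then (ln r)%:E else -oo%E
  | +oo%E => +oo%E
  | -oo%E => -oo%E
  end.

Definition below (x I : \bar R) (eps : R) : Prop :=
  match I with
  | +oo%E => (x < +oo)%E
  | _ => (x <= I - eps%:E)%E
  end.

Definition divinf (x : R) (I : \bar R) : \bar R :=
  match I with
  | r%:E => (x / r)%:E
  | _ => 0%E
  end.

Section Procedure.
Context {d} {S : measurableType d} {Omega : Type} (f : Theta -> S -> R) (K : nat)
  (X : 'I_K -> nat -> Omega -> S) (thhat : 'I_K -> nat -> Omega -> Theta)
  (Th0 Th1 : set Theta).

Definition ratio0 (n : nat) (w : Omega) : \bar R :=
  eratio (Lhat f X thhat n w) (Lbig0 f X Th0 Th1 n w).
Definition ratio1 (n : nat) (w : Omega) : \bar R :=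
  eratio (Lhat f X thhat n w) (Lbig1 f X Th0 Th1 n w).

Definition stops (a b : R) (n : nat) (w : Omega) : Prop :=
  (b%:E <= ratio0 n w)%E /\ (a%:E <= ratio1 n w)%E.

Definition That (a b : R) (w : Omega) : \bar R :=
  ereal_inf [set (n%:R)%:E | n in [set n | (1 <= n)%N /\ stops a b n w]].

End Procedure.

(* Under P th, the X_k(n), k in [K], n >= 1, are mutually independent and
   X_k(n) has density f_{th_k} w.r.t. nu: product rule on all finite rectangles. *)
Definition iid_model {d} {S : measurableType d} {d'} {Omega : measurableType d'}
  (nu : {measure set S -> \bar R}) (f : Theta -> S -> R) (K : nat)
  (P : ('I_K -> Theta) -> probability Omega R) (X : 'I_K -> nat -> Omega -> S)
  (th : 'I_K -> Theta) :=
  forall (N : nat) (A : 'I_K -> nat -> set S), (forall k n, measurable (A k n)) ->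
    P th [set w | forall k n, (1 <= n <= N)%N -> A k n (X k n w)] =
    (\prod_(k < K) \prod_(1 <= n < N.+1) \int[nu]_(x in A k n) (f (th k) x)%:E)%E.

Definition conditionC {d} {S : measurableType d} {d'} {Omega : measurableType d'}
  (nu : {measure set S -> \bar R}) (f : Theta -> S -> R) (Th0 Th1 : set Theta) (K : nat)
  (P : ('I_K -> Theta) -> probability Omega R) (X : 'I_K -> nat -> Omega -> S)
  (thhat : 'I_K -> nat -> Omega -> Theta) :=
  forall th, bTheta Th0 Th1 th -> forall eps : R, 0 < eps ->
    (\sum_(1 <= n <oo) P th [set w | below ((n%:R^-1)%:E *
         elog (ratio0 f X thhat Th0 Th1 n w))%E (Info0 nu f Th0 Th1 th) eps] < +oo)%E /\
    (\sum_(1 <= n <oo) P th [set w | below ((n%:R^-1)%:E *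
         elog (ratio1 f X thhat Th0 Th1 n w))%E (Info1 nu f Th0 Th1 th) eps] < +oo)%E.

End SeqTest.

(* Main.v *)
Require Import Defs.
From mathcomp Require Import ring lra.
Import Order.TTheory GRing.Theory Num.Theory.
Local Open Scope classical_set_scope.
Local Open Scope ring_scope.

Lemma kl_ge (R : realType) (p q : R) : 0 <= p -> 0 <= q ->
  ((p - q)%:E <= kl_integrand p q)%E.
Proof.
move=> p0 q0; rewrite /kl_integrand.
case: ifP => hp; first by rewrite lee_fin; lra.
case: ifP => hq; first exact: leey.
have pp : 0 < p by rewrite ltNge hp.
have qp : 0 < q by rewrite ltNge hq.
rewrite lee_fin.
have h1 : ln (q / p) <= q / p - 1.
  have qp0 : 0 < q / p by exact: divr_gt0.
  have := @le_ln1Dx R (q / p - 1).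
  rewrite (_ : 1 + (q / p - 1) = q / p); last by lra.
  apply; lra.
have h2 : ln (p / q) = - ln (q / p).
  have e : p / q * (q / p) = 1.
    by rewrite mulrA divfK ?gt_eqF // divff ?gt_eqF.
  have := @lnM R (p / q) (q / p).
  rewrite !posrE !divr_gt0 // e ln1 => /(_ isT isT) h; lra.
rewrite h2.
have : p * (q / p) = q by rewrite mulrC divfK ?gt_eqF.
nra.
Qed.

Lemma int_mono (R : realType) d (T : measurableType d) (mu : {measure set T -> \bar R})
  (g h : T -> \bar R) : (forall x, (0 <= g x)%E) -> (forall x, (g x <= h x)%E) ->
  (\int[mu]_x g x <= \int[mu]_x h x)%E.
Proof.
move=> g0 gh.
have h0 x : (0 <= h x)%E by exact: le_trans (g0 x) (gh x).
rewrite !ge0_integralTE //; apply: le_ereal_sup => y [u uh <-].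
by exists u => // x; exact: le_trans (uh x) (gh x).
Qed.

Lemma KL_ge0 (R : realType) d (S : measurableType d) (nu : {measure set S -> \bar R})
  (Theta : Type) (f : Theta -> S -> R) t t' :
  (forall t, measurable_fun setT (f t)) -> (forall t x, 0 <= f t x) ->
  (forall t, (\int[nu]_x (f t x)%:E = 1)%E) -> (0 <= KL nu f t t')%E.
Proof.
move=> mf f0 f1.
have intg t0 : nu.-integrable setT (EFin \o f t0).
  apply/integrableP; split; first exact/measurable_EFinP.
  rewrite (eq_integral (fun x => (f t0 x)%:E)); last by move=> x _ /=; rewrite ger0_norm.
  apply: (@le_lt_trans _ _ 1%E); last exact: ltry.
  by rewrite -(f1 t0).
set F := fun x => (f t x - f t' x)%:E.
have F0 : (\int[nu]_x F x = 0)%E.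
  rewrite /F; under eq_integral do rewrite EFinB.
  by rewrite integralB_EFin // !f1 subee.
rewrite integralE in F0.
rewrite /KL integralE -F0; apply: leeB.
  apply: int_mono => [x|x]; first exact: funepos_ge0.
  by apply: (@funepos_le _ _ setT) => [y _|]; [exact: kl_ge | exact: in_setT].
apply: int_mono => [x|x]; first exact: funeneg_ge0.
by apply: (@funeneg_le _ _ setT) => [y _|]; [exact: kl_ge | exact: in_setT].
Qed.

Lemma Info0_gt0 (R : realType) d (S : measurableType d) (nu : {measure set S -> \bar R})
  (Theta : Type) (Th0 Th1 : set Theta) (f : Theta -> S -> R) (K : nat) th :
  Th0 `|` Th1 = setT -> standing_assumption nu f Th0 Th1 ->
  (forall t t', (0 <= KL nu f t t')%E) -> bTheta Th0 Th1 th ->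
  (0 < Info0 nu f Th0 Th1 (K:=K) th)%E.
Proof.
move=> hU [sa0 sa1] kl0 [t0 [t1 [h0 [h1 hk]]]].
apply: (@lt_le_trans _ _ (ereal_inf [set KL nu f t0 t | t in Th1])); first exact: sa0.
apply: le_ereal_inf_tmp => _ [th' [hb [k [Ak nAk]]] <-].
have Th0k : Th0 (th k).
  have : (Th0 `|` Th1) (th k) by rewrite hU.
  by case.
rewrite -((hk k).1 Th0k).
apply: (@le_trans _ _ (KL nu f (th k) (th' k))).
  by apply: ereal_inf_lbound; exists (th' k).
rewrite /KLvec (bigD1 k) //=; apply: leeDl.
by apply: sume_ge0 => i _; exact: kl0.
Qed.

Lemma Info1_gt0 (R : realType) d (S : measurableType d) (nu : {measure set S -> \bar R})
  (Theta : Type) (Th0 Th1 : set Theta) (f : Theta -> S -> R) (K : nat) th :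
  Th0 `|` Th1 = setT -> standing_assumption nu f Th0 Th1 ->
  (forall t t', (0 <= KL nu f t t')%E) -> bTheta Th0 Th1 th ->
  (0 < Info1 nu f Th0 Th1 (K:=K) th)%E.
Proof.
move=> hU [sa0 sa1] kl0 [t0 [t1 [h0 [h1 hk]]]].
apply: (@lt_le_trans _ _ (ereal_inf [set KL nu f t1 t | t in Th0])); first exact: sa1.
apply: le_ereal_inf_tmp => _ [th' [hb [k [Ak nAk]]] <-].
have Th0k : Th0 (th' k).
  have : (Th0 `|` Th1) (th' k) by rewrite hU.
  by case.
rewrite -((hk k).2 Ak).
apply: (@le_trans _ _ (KL nu f (th k) (th' k))).
  by apply: ereal_inf_lbound; exists (th' k).
rewrite /KLvec (bigD1 k) //=; apply: leeDl.
by apply: sume_ge0 => i _; exact: kl0.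
Qed.
Lemma invn_gt0 (R : realType) (n : nat) : (0 < n)%N -> 0 < (n%:R : R)^-1.
Proof. by move=> n0; rewrite invr_gt0 ltr0n. Qed.

Lemma mulNy_pos (R : realType) (c : R) : 0 < c -> (c%:E * -oo = -oo)%E.
Proof. by move=> c0; rewrite mulrNy gtr0_sg // mul1e. Qed.

Lemma muly_pos (R : realType) (c : R) : 0 < c -> (c%:E * +oo = +oo)%E.
Proof. by move=> c0; rewrite mulry gtr0_sg // mul1e. Qed.

Lemma elog_key (R : realType) (x : \bar R) (b : R) : 0 < b -> (x < b%:E)%E ->
  (elog x <= (ln b)%:E)%E /\ (elog x < +oo)%E.
Proof.
move=> b0; case: x => [s| |].
- rewrite lte_fin /= => sb; case: ifP => s0; last by rewrite leNye ltNye.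
  rewrite lee_fin ltry; split => //; rewrite ler_ln ?posrE //.
  exact: ltW.
- by rewrite ltNge leey.
- by rewrite /= leNye ltNye.
Qed.

Lemma below_key (R : realType) (x I : \bar R) (e b : R) (n : nat) :
  (0 < I)%E -> (0 < n)%N -> 0 < b -> ~ (b%:E <= x)%E ->
  (forall r, I = r%:E -> ln b / n%:R <= r - e) ->
  below ((n%:R^-1)%:E * elog x)%E I e.
Proof.
move=> I0 n0 b0 nbx hr.
have [h1 h2] : (elog x <= (ln b)%:E)%E /\ (elog x < +oo)%E.
  by apply: elog_key => //; rewrite ltNge; apply/negP.
have ni := @invn_gt0 R n n0.
case: I I0 hr => [r| |] //= _ hr.
- apply: le_trans (lee_wpmul2l _ h1) _; first by rewrite lee_fin ltW.
  by rewrite -EFinM -EFinB lee_fin mulrC; exact: hr.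
- case E: (elog x) h2 => [s| |] //= _.
    by rewrite -EFinM ltry.
  by rewrite mulNy_pos.
Qed.

Lemma below_meas (R : realType) d' (Omega : measurableType d')
  (rat : Omega -> \bar R) (I : \bar R) (e : R) (n : nat) :
  measurable_fun setT rat -> (0 < I)%E -> (0 < n)%N ->
  measurable [set w | below ((n%:R^-1)%:E * elog (rat w))%E I e].
Proof.
move=> mr I0 n0.
have ni := @invn_gt0 R n n0.
case: I I0 => [r| |] //= _.
- rewrite (_ : [set w | _] = [set w | (rat w <= (expR (n%:R * (r - e)))%:E)%E]).
    rewrite -(setTI [set w | _]); apply: measurable_lee => //.
  apply: eq_set => w; apply: propext.
  rewrite -EFinD.
  case: (rat w) => [s| |] /=.
  + case: ifP => s0.
      rewrite -EFinM !lee_fin mulrC ler_pdivrMr ?ltr0n // -ler_expR lnK ?posrE //.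
      by rewrite mulrC.
    rewrite mulNy_pos // leNye lee_fin; split => // _.
    apply: le_trans (expR_ge0 _); rewrite leNgt s0 //.
  + by rewrite muly_pos // !leye_eq.
  + by rewrite mulNy_pos // !leNye.
- rewrite (_ : [set w | _] = ~` [set w | (+oo <= rat w)%E]).
    apply: measurableC; rewrite -(setTI [set w | _]); apply: measurable_lee => //.
  rewrite /setC; apply: eq_set => w /=; apply: propext.
  case: (rat w) => [s| |] /=.
  + case: ifP => s0; first by rewrite -EFinM ltry leye_eq.
    by rewrite mulNy_pos // ltNye leye_eq.
  + rewrite muly_pos // ltxx; split => // h; exfalso; apply: h; exact: leey.
  + by rewrite mulNy_pos // ltNye leye_eq.
Qed.
Lemma count_lb (R : realType) (u : nat -> \bar R) (N m : nat) :
  (forall i, (0 <= u i)%E) -> (forall i, (N <= i < m)%N -> (1 <= u i)%E) ->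
  (((m - N)%:R)%:E <= \sum_(0 <= i < m) u i)%E.
Proof.
move=> u0; elim: m => [|m IH] h.
  by rewrite sub0n big_geq.
rewrite big_nat_recr //=.
case: (leqP N m) => Nm.
  rewrite subSn // -addn1 natrD EFinD; apply: leeD.
    by apply: IH => i /andP[a b]; apply: h; rewrite a ltnS ltnW.
  by apply: h; rewrite Nm leqnn.
rewrite (_ : (m.+1 - N)%N = 0%N); last by apply/eqP; rewrite subn_eq0.
by apply: adde_ge0 => //; apply: sume_ge0.
Qed.

Lemma series_lb (R : realType) (u : nat -> \bar R) (N m : nat) :
  (forall i, (0 <= u i)%E) -> (forall i, (N <= i < m)%N -> (1 <= u i)%E) ->
  (((m - N)%:R)%:E <= \sum_(0 <= i <oo) u i)%E.
Proof.
move=> u0 h; apply: le_trans (@count_lb R u N m u0 h) _.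
exact: nneseries_lim_ge.
Qed.

Lemma That_bound (R : realType) (st : nat -> Prop) (u : nat -> \bar R) (N : nat) :
  (1 <= N)%N -> (forall i, (0 <= u i)%E) ->
  (forall n, (N <= n)%N -> ~ st n -> (1 <= u n)%E) ->
  (ereal_inf [set (n%:R)%:E | n in [set n | (1 <= n)%N /\ st n]] <=
     (N%:R)%:E + \sum_(0 <= i <oo) u i)%E.
Proof.
move=> N1 u0 hu.
have s0 : (0 <= \sum_(0 <= i <oo) u i)%E by apply: nneseries_ge0.
case: (pselect (exists n, (1 <= n)%N /\ st n)) => [ex|nex].
  have ex' : exists n, `[< (1 <= n)%N /\ st n >] by case: ex => n hn; exists n; apply/asboolP.
  case: (ex_minnP ex') => n0 /asboolP [n0pos sn0] minn0.
  apply: (@le_trans _ _ (n0%:R)%:E); first by apply: ereal_inf_lbound; exists n0.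
  case: (leqP n0 N) => hn0.
    by apply: le_trans (leeDl _ s0); rewrite lee_fin ler_nat.
  have := @series_lb R u N n0 u0.
  have hh : forall i, (N <= i < n0)%N -> (1 <= u i)%E.
    move=> i /andP[a b]; apply: hu => // si.
    have := minn0 i; rewrite (leq_trans N1 a) /=.
    have -> : `[< true /\ st i >] = true by apply/asboolP.
    by move=> /(_ isT); rewrite leqNgt b.
  move=> /(_ hh) h; apply: le_trans (leeD (lexx _) h).
  by rewrite -EFinD -natrD subnKC // ltnW.
rewrite (_ : [set _ | _ in _] = set0); last first.
  by apply/seteqP; split => // x [n hn _]; apply: nex; exists n.
rewrite ereal_inf0.
suff -> : (\sum_(0 <= i <oo) u i)%E = +oo%E by rewrite addey.
move: s0; case E: (\sum_(0 <= i <oo) u i)%E => [s| |] //= s0.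
have hh : forall i, (N <= i < N + (Num.trunc s).+1)%N -> (1 <= u i)%E.
  by move=> i /andP[a _]; apply: hu => // si; apply: nex; exists i; split => //; exact: leq_trans N1 a.
have := @series_lb R u N (N + (Num.trunc s).+1) u0 hh.
rewrite E addKn lee_fin => hs.
have := @truncn_itv R s; rewrite lee_fin in s0.
move=> /(_ s0) /andP[_ hlt].
by move: (lt_le_trans hlt hs); rewrite ltxx.
Qed.


Lemma real_key (R : realType) (lb r dl mr n : R) :
  0 < r -> 0 < dl -> 0 <= mr -> 0 < n -> (1 + dl) * mr <= n -> lb / r <= mr ->
  lb / n <= r - r * dl / (1 + dl).
Proof.
move=> r0 dl0 mr0 n0 hn hl.
have d0 : 1 + dl != 0 by rewrite gt_eqF // addr_gt0.
have e1 : r - r * dl / (1 + dl) = r / (1 + dl).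
  by field.
rewrite e1 ler_pdivrMr //.
have hl' : lb <= mr * r by rewrite -ler_pdivrMr.
have x0 : 0 < r / (1 + dl) by rewrite divr_gt0 // addr_gt0.
have hx : r / (1 + dl) * (1 + dl) = r by rewrite divfK.
move: x0 hx; set x := r / (1 + dl) => x0 hx.
have : 0 <= x * (n - (1 + dl) * mr) by rewrite mulr_ge0 ?subr_ge0 // ltW.
rewrite -hx in hl'.
nra.
Qed.

Theorem theorem3 (R : realType) (d : measure_display) (S : measurableType d)
  (nu : {measure set S -> \bar R}) (Theta : Type) (Th0 Th1 : set Theta)
  (f : Theta -> S -> R) (K : nat)
  (d' : measure_display) (Omega : measurableType d')
  (P : ('I_K -> Theta) -> probability Omega R)
  (X : 'I_K -> nat -> Omega -> S) (thhat : 'I_K -> nat -> Omega -> Theta) :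
  sigma_finite setT nu ->
  Th0 !=set0 -> Th1 !=set0 -> Th0 `&` Th1 = set0 -> Th0 `|` Th1 = setT ->
  (forall t, measurable_fun setT (f t)) ->
  (forall t x, 0 <= f t x) ->
  (forall t, (\int[nu]_x (f t x)%:E = 1)%E) ->
  standing_assumption nu f Th0 Th1 ->
  (0 < K)%N ->
  (forall k n, measurable_fun setT (X k n)) ->
  (forall th, bTheta Th0 Th1 th -> iid_model nu f P X th) ->
  near_MLE f X thhat ->
  (forall n, measurable_fun setT (fun w : Omega => (ratio0 f X thhat Th0 Th1 n w : \bar R))) ->
  (forall n, measurable_fun setT (fun w : Omega => (ratio1 f X thhat Th0 Th1 n w : \bar R))) ->
  conditionC nu f Th0 Th1 P X thhat ->
  forall th, bTheta Th0 Th1 th ->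
  (Info0 nu f Th0 Th1 th < +oo \/ Info1 nu f Th0 Th1 th < +oo)%E ->
  forall eps : R, 0 < eps ->
  exists M : R, forall a b : R, M <= a -> M <= b ->
    (\int[P th]_w That f X thhat Th0 Th1 a b w
       <= (1 + eps)%:E * maxe (divinf (ln b) (Info0 nu f Th0 Th1 th))
                              (divinf (ln a) (Info1 nu f Th0 Th1 th)))%E.
Proof.
move=> sfin Th0ne Th1ne Th01 hU mf f0 f1 sa K0 mX iid nMLE mr0 mr1 hC th hth hfin eps eps0.
have kl0 : forall t t', (0 <= KL nu f t t')%E by move=> t t'; apply: KL_ge0.
have I0p : (0 < Info0 nu f Th0 Th1 th)%E by apply: Info0_gt0.
have I1p : (0 < Info1 nu f Th0 Th1 th)%E by apply: Info1_gt0.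
move: hfin I0p I1p (hC th hth).
set I0 := Info0 nu f Th0 Th1 th. set I1 := Info1 nu f Th0 Th1 th.
move=> hfin I0p I1p hC'.
pose dl := eps / 2.
have dl0 : 0 < dl by rewrite /dl divr_gt0.
pose ee (I : \bar R) := match I with r%:E => r * dl / (1 + dl) | _ => 1 end.
have ee_pos I : (0 < I)%E -> 0 < ee I.
  case: I => [r| |] //= r0; rewrite lte_fin in r0.
  by rewrite divr_gt0 ?mulr_gt0 // addr_gt0.
pose E0 n := [set w | below ((n%:R^-1)%:E * elog (ratio0 f X thhat Th0 Th1 n w))%E I0 (ee I0)].
pose E1 n := [set w | below ((n%:R^-1)%:E * elog (ratio1 f X thhat Th0 Th1 n w))%E I1 (ee I1)].
have [S0 _] := hC' (ee I0) (ee_pos _ I0p).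
have [_ S1] := hC' (ee I1) (ee_pos _ I1p).
have S0' : (\sum_(1 <= n <oo) P th (E0 n) < +oo)%E := S0.
have S1' : (\sum_(1 <= n <oo) P th (E1 n) < +oo)%E := S1.
pose SS := (\sum_(1 <= n <oo) P th (E0 n) + \sum_(1 <= n <oo) P th (E1 n))%E.
have SS0 : (0 <= SS)%E by apply: adde_ge0; apply: nneseries_ge0.
have SSfin : SS \is a fin_num.
  by rewrite ge0_fin_numE // /SS lte_add_pinfty.
pose C := fine SS.
have SSC : SS = C%:E by rewrite /C fineK.
have C0 : 0 <= C by rewrite -lee_fin -SSC.
pose T := 2 * (1 + C) / eps.
have T0 : 0 <= T by rewrite /T divr_ge0 ?mulr_ge0 ?addr_ge0 // ltW.
pose q (I : \bar R) := match I with r%:E => r | _ => 0 end.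
pose M := Num.max 1 (Num.max (expR (T * q I0)) (expR (T * q I1))).
exists M => a b Ma Mb.
move: Ma; rewrite !ge_max => /andP[a1 /andP[aq0 aq1]].
move: Mb; rewrite !ge_max => /andP[b1 /andP[bq0 bq1]].
have a0 : 0 < a by apply: lt_le_trans a1.
have b0 : 0 < b by apply: lt_le_trans b1.
pose dv (x : R) (I : \bar R) := match I with r%:E => x / r | _ => 0 end.
have divinfE x I : divinf x I = (dv x I)%:E by case: I.
pose mr := Num.max (dv (ln b) I0) (dv (ln a) I1).
rewrite !divinfE -EFin_max -/mr -EFinM.
have dv0 x I : 0 <= x -> (0 < I)%E -> 0 <= dv x I.
  case: I => [r| |] //= x0 r0; rewrite lte_fin in r0.
  exact: divr_ge0 (ltW r0).
have dvT (c : R) I : (0 < I)%E -> (I < +oo)%E -> expR (T * q I) <= c -> T <= dv (ln c) I.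
  case: I => [r| |] //= r0 _ hc; rewrite lte_fin in r0.
  rewrite ler_pdivlMr //.
  have c0 : 0 < c by apply: lt_le_trans hc; exact: expR_gt0.
  by rewrite -ler_expR lnK ?posrE.
have mrp : 0 <= mr.
  by rewrite /mr le_max dv0 // ln_ge0.
have mrT : T <= mr.
  rewrite /mr le_max; case: hfin => h.
    by apply/orP; left; apply: dvT.
  by apply/orP; right; apply: dvT.
pose N := (Num.trunc ((1 + dl) * mr)).+1.
have N1 : (1 <= N)%N by [].
have [hNlo hNhi] : (1 + dl) * mr < N%:R /\ N%:R <= (1 + dl) * mr + 1.
  have := @truncn_itv R ((1 + dl) * mr).
  have hx : 0 <= (1 + dl) * mr by rewrite mulr_ge0 // addr_ge0 // ltW.
  move=> /(_ hx) /andP[h1 h2].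
  split; first exact: h2.
  by rewrite /N -addn1 natrD lerD2r.
have KEY n w : (N <= n)%N -> ~ stops f X thhat Th0 Th1 a b n w -> E0 n w \/ E1 n w.
  move=> Nn; rewrite /stops => ns.
  have n0 : (0 < n)%N by apply: leq_trans N1 Nn.
  have hn : (1 + dl) * mr <= n%:R.
    by apply: ltW; apply: lt_le_trans hNlo _; rewrite ler_nat.
  have nR : 0 < (n%:R : R) by rewrite ltr0n.
  have [h|h] : ~ (b%:E <= ratio0 f X thhat Th0 Th1 n w)%E \/ ~ (a%:E <= ratio1 f X thhat Th0 Th1 n w)%E.
    by case: (pselect (b%:E <= ratio0 f X thhat Th0 Th1 n w)%E) => h; [right => h'; exact: ns | left].
  - left; rewrite /E0 /=; apply: (@below_key R _ _ _ b n I0p n0 b0 h) => r hr; rewrite hr /=.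
    have r0 : 0 < r by rewrite -lte_fin -hr.
    apply: (@real_key R (ln b) r dl mr n%:R r0 dl0 mrp nR hn).
    by rewrite /mr le_max; apply/orP; left; rewrite hr /=.
  - right; rewrite /E1 /=; apply: (@below_key R _ _ _ a n I1p n0 a0 h) => r hr; rewrite hr /=.
    have r0 : 0 < r by rewrite -lte_fin -hr.
    apply: (@real_key R (ln a) r dl mr n%:R r0 dl0 mrp nR hn).
    by rewrite /mr le_max; apply/orP; right; rewrite hr /=.
pose h (i : nat) (w : Omega) : \bar R := if (N <= i)%N then (((\1_(E0 i) w : R))%:E + ((\1_(E1 i) w : R))%:E)%E else 0%E.
have ind0 (A : set Omega) w : (0 <= ((\1_A w : R))%:E)%E by rewrite lee_fin indicE ler0n.
have h0 i w : (0 <= h i w)%E.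
  by rewrite /h; case: ifP => // _; apply: adde_ge0.
have mE0 n : (0 < n)%N -> measurable (E0 n).
  by move=> n0; apply: (@below_meas R _ _ _ I0 (ee I0) n (mr0 n) I0p n0).
have mE1 n : (0 < n)%N -> measurable (E1 n).
  by move=> n0; apply: (@below_meas R _ _ _ I1 (ee I1) n (mr1 n) I1p n0).
have mh i : measurable_fun setT (h i).
  rewrite /h /=; case: (boolP (N <= i)%N) => Ni; last exact: measurable_cst.
  have i0 : (0 < i)%N by apply: leq_trans N1 Ni.
  apply: emeasurable_funD; apply/measurable_EFinP; apply: measurable_indic.
    exact: mE0.
  exact: mE1.
have That0 w : (0 <= That f X thhat Th0 Th1 a b w)%E.
  by apply: le_ereal_inf_tmp => _ [n _ <-]; rewrite lee_fin ler0n.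
have pw w : (That f X thhat Th0 Th1 a b w <= (N%:R)%:E + \sum_(0 <= i <oo) h i w)%E.
  apply: (@That_bound R (fun n => stops f X thhat Th0 Th1 a b n w) (fun i => h i w) N N1) => //.
  move=> n Nn ns; rewrite /h Nn.
  case: (KEY n w Nn ns) => hE.
    by rewrite indicE mem_set //; apply: leeDl.
  by rewrite !indicE (mem_set hE); apply: leeDr; rewrite lee_fin ler0n.
apply: le_trans (@int_mono R _ _ (P th) _ _ That0 pw) _.
have mser : measurable_fun setT (fun w => \sum_(0 <= i <oo) h i w)%E.
  exact: (@ge0_emeasurable_sum _ _ _ setT h xpredT (fun k x _ _ => h0 k x) (fun k _ => mh k)).
rewrite ge0_integralD //; try (by move=> w _; apply: nneseries_ge0);
  try (by move=> w _; rewrite lee_fin ler0n).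
rewrite integral_cst //.
have P1 : P th [set: Omega] = 1%E := probability_setT (P th).
rewrite [X in (_ * X + _)%E]P1 mule1.
rewrite integral_nneseries //.
have hint i : (\int[P th]_x h i x = if (N <= i)%N then P th (E0 i) + P th (E1 i) else 0)%E.
  rewrite /h; case: (boolP (N <= i)%N) => Ni; last exact: integral0.
  have i0 : (0 < i)%N by apply: leq_trans N1 Ni.
  rewrite ge0_integralD //; try (by apply/measurable_EFinP; apply: measurable_indic; exact: mE0);
    try (by apply/measurable_EFinP; apply: measurable_indic; exact: mE1).
  rewrite !integral_indic // ?setIT //; [exact: mE1 | exact: mE0].
under eq_eseriesr do rewrite hint.
have Pge0 (A : set Omega) : (0 <= P th A)%E by apply: measure_ge0.
apply: (@le_trans _ _ ((N%:R)%:E + SS)%E).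
  apply: leeD => //.
  rewrite /SS -nneseriesD; last 2 first.
    by move=> *; apply: Pge0.
    by move=> *; apply: Pge0.
  rewrite [X in (_ <= X)%E]eseries_cond [X in (_ <= X)%E]eseries_mkcond.
  apply: lee_nneseries => [i _ _|i _].
    by case: ifP => // _; apply: adde_ge0.
  case: (boolP (N <= i)%N) => Ni.
    by rewrite /= (leq_trans N1 Ni).
  by case: ifP => // _; apply: adde_ge0.
rewrite SSC -EFinD lee_fin.
have eT : eps * T = 2 * (1 + C) by rewrite /T mulrC divfK // gt_eqF.
have edl : 2 * dl = eps by rewrite /dl mulrC divfK.
have : 0 <= eps * (mr - T) by rewrite mulr_ge0 ?subr_ge0 // ltW.
nra.
Qed.
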